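(* Let $\xi>0$ and consider the reduced problem $\dot y=e^z-1$, $\dot z=\xi+e^z(\xi z-\xi y-\xi)$ (i.e. with $\alpha=\xi$), compactified at infinity. There is a unique heteroclinic connection between the points at infinity $Q^3$ and $Q^6$ on the critical manifold; it runs through the manifolds $W^{c,s}$ and $W^{c,u}$ and coincides with the level set $\{H=1\}$ of $H(y,z)=-e^{-\xi y}(\xi y-\xi z+\xi+1-\xi e^{-z})+1$. This set can be written as the union of two graphs $z=z^\pm(y)$, $y\ge -1/\xi$, such that $z^-(y)$ approaches $Q^3$ with $z^-=O(y)$ and $z^+(y)$ approaches $Q^6$ with $z^+=O(\ln y)$ as $y\to\infty$.
   Context: Points at infinity: with $y_3=y/z$, $w_3=1/z$ ($z>0$), $Q^3=(w_3,y_3)=(0,1)$ (for $\alpha=\xi$); with $\rho=-1/z$, $\eta=e^{-z}/y$ ($z<0$, $y>0$), $Q^6=(\rho,\eta)=(0,1)$. $W^{c,s}$ is the unique center-stable manifold of $Q^3$ and $W^{c,u}$ the unique center-unstable manifold of $Q^6$ for the compactified, time-desingularized reduced problem. *)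

(* Defs.v *)
From Stdlib Require Import Reals.
From Coquelicot Require Import Coquelicot.
Open Scope R_scope.

Definition field_y (y z : R) : R := exp z - 1.
Definition field_z (xi y z : R) : R := xi + exp z * (xi * z - xi * y - xi).

Definition H (xi y z : R) : R :=
  - exp (- xi * y) * (xi * y - xi * z + xi + 1 - xi * exp (- z)) + 1.

Definition Rbar_at_left' (b : Rbar) : (R -> Prop) -> Prop :=
  match b with
  | Finite x => at_left x
  | p_infty => Rbar_locally p_infty
  | m_infty => Rbar_locally m_infty
  end.
Definition Rbar_at_right' (a : Rbar) : (R -> Prop) -> Prop :=
  match a with
  | Finite x => at_right x
  | p_infty => Rbar_locally p_infty
  | m_infty => Rbar_locally m_infty
  end.

Definition is_sol (xi : R) (a b : Rbar) (y z : R -> R) : Prop :=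
  Rbar_lt a b /\
  forall t : R, Rbar_lt a t -> Rbar_lt t b ->
    is_derive y t (field_y (y t) (z t)) /\
    is_derive z t (field_z xi (y t) (z t)).

(* Convergence to Q^3 along filter F: in the chart y3 = y/z, w3 = 1/z (z > 0),
   (w3, y3) -> (0, 1). *)
Definition tends_Q3 (F : (R -> Prop) -> Prop) (y z : R -> R) : Prop :=
  F (fun t => 0 < z t) /\
  filterlim (fun t => / z t) F (locally 0) /\
  filterlim (fun t => y t / z t) F (locally 1).

(* Convergence to Q^6 along filter F: in the chart rho = -1/z, eta = e^{-z}/y
   (z < 0, y > 0), (rho, eta) -> (0, 1). *)
Definition tends_Q6 (F : (R -> Prop) -> Prop) (y z : R -> R) : Prop :=
  F (fun t => z t < 0 /\ 0 < y t) /\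
  filterlim (fun t => - / z t) F (locally 0) /\
  filterlim (fun t => exp (- z t) / y t) F (locally 1).

Definition heteroclinic_Q3_Q6 (xi : R) (a b : Rbar) (y z : R -> R) : Prop :=
  is_sol xi a b y z /\
  ((tends_Q6 (Rbar_at_right' a) y z /\ tends_Q3 (Rbar_at_left' b) y z) \/
   (tends_Q3 (Rbar_at_right' a) y z /\ tends_Q6 (Rbar_at_left' b) y z)).

Definition orbit (a b : Rbar) (y z : R -> R) (Y Z : R) : Prop :=
  exists t : R, Rbar_lt a t /\ Rbar_lt t b /\ y t = Y /\ z t = Z.

(* Main.v *)
Require Import Defs.
From Stdlib Require Import Reals Lra Psatz.
From Coquelicot Require Import Coquelicot.
Open Scope R_scope.

Lemma ball_R x (e : R) y : ball x e y <-> Rabs (y - x) < e.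
Proof. unfold ball; simpl; unfold AbsRing_ball, abs, minus, plus, opp; simpl. tauto. Qed.

Lemma lim_R {T} (F : (T -> Prop) -> Prop) {FF : Filter F} (f : T -> R) l :
  (forall eps, 0 < eps -> F (fun t => Rabs (f t - l) < eps)) -> filterlim f F (locally l).
Proof.
  intros H. apply filterlim_locally. intros eps.
  apply filter_imp with (2 := H eps (cond_pos eps)). intros t Ht. now apply ball_R.
Qed.

Lemma lim_R_inv {T} (F : (T -> Prop) -> Prop) {FF : Filter F} (f : T -> R) l :
  filterlim f F (locally l) -> forall eps, 0 < eps -> F (fun t => Rabs (f t - l) < eps).
Proof.
  intros H eps He. apply filterlim_locally with (eps := mkposreal eps He) in H.
  apply filter_imp with (2 := H). intros t Ht. now apply ball_R.
Qed.

Lemma exp_sq w : 0 <= w -> 1 + w + w * w / 4 <= exp w.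
Proof.
  intros Hw. replace w with (w/2 + w/2) at 4 by field. rewrite exp_plus.
  pose proof (exp_ineq1_le (w/2)). nra.
Qed.

Lemma exp_pos' x : 0 < exp x. Proof. apply exp_pos. Qed.

Definition cc (xi : R) := 1 + / xi.
Definition g (xi z : R) := z + exp (- z) - cc xi.

Lemma exp_opp_mul x : exp (- x) * exp x = 1.
Proof. rewrite <- exp_plus. replace (-x + x) with 0 by ring. apply exp_0. Qed.

Lemma exp_le1 z : 0 <= z -> exp (- z) <= 1.
Proof. intros. rewrite <- exp_0. destruct (Req_dec z 0). subst. rewrite Ropp_0. lra.
  left. apply exp_increasing. lra. Qed.

Lemma exp_ge1 z : z <= 0 -> 1 <= exp (- z).
Proof. intros. rewrite <- exp_0. destruct (Req_dec z 0). subst. rewrite Ropp_0. lra.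
  left. apply exp_increasing. lra. Qed.

Lemma g_ge xi z : - / xi <= g xi z.
Proof. unfold g, cc. pose proof (exp_ineq1_le (- z)). lra. Qed.

Lemma g_inc xi z1 z2 : 0 <= z1 -> z1 < z2 -> g xi z1 < g xi z2.
Proof.
  intros H1 H2. unfold g.
  replace (- z2) with (- z1 + - (z2 - z1)) by ring. rewrite exp_plus.
  pose proof (exp_ineq1 (- (z2 - z1)) ltac:(lra)).
  pose proof (exp_le1 z1 H1). pose proof (exp_pos (- z1)).
  pose proof (exp_le1 (z2 - z1) ltac:(lra)).
  nra.
Qed.

Lemma g_dec xi z1 z2 : z2 <= 0 -> z1 < z2 -> g xi z2 < g xi z1.
Proof.
  intros H1 H2. unfold g.
  replace (- z1) with (- z2 + (z2 - z1)) by ring. rewrite exp_plus.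
  pose proof (exp_ineq1 (z2 - z1) ltac:(lra)).
  pose proof (exp_ge1 z2 H1).
  nra.
Qed.

Lemma inc_inv xi a b : 0 <= a -> 0 <= b -> g xi a < g xi b -> a < b.
Proof.
  intros Ha Hb H. destruct (Rlt_le_dec a b) as [|Hl]; auto.
  destruct Hl as [Hl|Hl]. pose proof (g_inc xi b a Hb Hl). lra. subst; lra.
Qed.

Lemma dec_inv xi a b : a <= 0 -> b <= 0 -> g xi a < g xi b -> b < a.
Proof.
  intros Ha Hb H. destruct (Rlt_le_dec b a) as [|Hl]; auto.
  destruct Hl as [Hl|Hl]. pose proof (g_dec xi a b Hb Hl). lra. subst; lra.
Qed.

Lemma g_cont xi Y : continuity (fun z => g xi z - Y).
Proof.
  intros x. apply continuity_pt_filterlim. apply (ex_derive_continuous (fun z => g xi z - Y)).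
  unfold g. auto_derive. auto.
Qed.

Lemma zm_ex xi Y : - / xi < Y -> {z | 0 <= z /\ g xi z = Y}.
Proof.
  intros H.
  destruct (IVT (fun z => g xi z - Y) 0 (Y + cc xi) (g_cont xi Y)) as [z [Hz1 Hz2]].
  - unfold cc; lra.
  - unfold g, cc. rewrite Ropp_0, exp_0. lra.
  - unfold g. pose proof (exp_pos (- (Y + cc xi))). lra.
  - exists z. split; lra.
Qed.

Lemma zp_ex xi Y : - / xi < Y -> {z | z <= 0 /\ g xi z = Y}.
Proof.
  intros H.
  destruct (IVT (fun u => g xi (- u) - Y) 0 (2 * (Y + / xi + 1))) as [u [Hu1 Hu2]].
  - intros x. apply continuity_pt_filterlim. apply (ex_derive_continuous (fun u => g xi (- u) - Y)).
    unfold g. auto_derive. auto.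
  - lra.
  - unfold g, cc. rewrite Ropp_0, Ropp_0, exp_0. lra.
  - unfold g, cc. rewrite Ropp_involutive.
    pose proof (exp_sq (2 * (Y + / xi + 1)) ltac:(lra)). nra.
  - exists (- u). split; lra.
Qed.

Definition zm xi Y := match Rlt_le_dec (- / xi) Y with
  | left H => proj1_sig (zm_ex xi Y H) | right _ => 0 end.
Definition zp xi Y := match Rlt_le_dec (- / xi) Y with
  | left H => proj1_sig (zp_ex xi Y H) | right _ => 0 end.

Lemma zm_spec xi Y : - / xi <= Y -> 0 <= zm xi Y /\ g xi (zm xi Y) = Y.
Proof.
  intros H. unfold zm. destruct (Rlt_le_dec (- / xi) Y) as [H1|H1].
  - apply (proj2_sig (zm_ex xi Y H1)).
  - split. lra. unfold g, cc. rewrite Ropp_0, exp_0. lra.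
Qed.

Lemma zp_spec xi Y : - / xi <= Y -> zp xi Y <= 0 /\ g xi (zp xi Y) = Y.
Proof.
  intros H. unfold zp. destruct (Rlt_le_dec (- / xi) Y) as [H1|H1].
  - apply (proj2_sig (zp_ex xi Y H1)).
  - split. lra. unfold g, cc. rewrite Ropp_0, exp_0. lra.
Qed.


Lemma H_eq xi Y Z : xi <> 0 -> H xi Y Z = 1 - exp (- xi * Y) * xi * (Y - g xi Z).
Proof. intros. unfold Defs.H, g, cc. field. auto. Qed.

Lemma H_iff xi Y Z : 0 < xi -> (H xi Y Z = 1 <-> Y = g xi Z).
Proof.
  intros Hx. rewrite H_eq by lra. pose proof (exp_pos (- xi * Y)). split.
  - intros E. assert (E1 : exp (- xi * Y) * xi * (Y - g xi Z) = 0) by lra.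
    apply Rmult_integral in E1. destruct E1 as [E1|E1]. apply Rmult_integral in E1. lra. lra.
  - intros ->. ring.
Qed.

Lemma zm_cont xi Y0 : 0 < xi -> - / xi <= Y0 ->
  filterlim (zm xi) (within (fun u => - / xi <= u) (locally Y0)) (locally (zm xi Y0)).
Proof.
  intros Hx HY. apply lim_R; [typeclasses eauto|]. intros eps He. unfold within, locally.
  destruct (zm_spec xi Y0 HY) as [Hz0 Hg0]. set (z0 := zm xi Y0) in *.
  pose proof (g_inc xi z0 (z0 + eps) Hz0 ltac:(lra)) as Hhi.
  destruct (Rlt_le_dec (z0 - eps) 0) as [Hc|Hc].
  - exists (mkposreal (g xi (z0 + eps) - Y0) ltac:(lra)). intros Y HB HD. change R in Y.
    apply ball_R in HB. cbn [pos] in HB. destruct (zm_spec xi Y HD) as [Hw Hgw].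
    apply Rabs_def2 in HB. change (@minus (AbsRing.AbelianGroup R_AbsRing) Y Y0) with (Y - Y0) in HB. apply Rabs_def1.
    assert (zm xi Y < z0 + eps) by (apply (inc_inv xi); lra). lra.
    lra.
  - pose proof (g_inc xi (z0 - eps) z0 Hc ltac:(lra)) as Hlo.
    exists (mkposreal (Rmin (g xi (z0 + eps) - Y0) (Y0 - g xi (z0 - eps)))
      ltac:(apply Rmin_pos; lra)). intros Y HB HD. change R in Y.
    apply ball_R in HB. cbn [pos] in HB. destruct (zm_spec xi Y HD) as [Hw Hgw].
    pose proof (Rmin_l (g xi (z0 + eps) - Y0) (Y0 - g xi (z0 - eps))).
    pose proof (Rmin_r (g xi (z0 + eps) - Y0) (Y0 - g xi (z0 - eps))).
    apply Rabs_def2 in HB. change (@minus (AbsRing.AbelianGroup R_AbsRing) Y Y0) with (Y - Y0) in HB. apply Rabs_def1.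
    assert (zm xi Y < z0 + eps) by (apply (inc_inv xi); lra). lra.
    assert (z0 - eps < zm xi Y) by (apply (inc_inv xi); lra). lra.
Qed.

Lemma zp_cont xi Y0 : 0 < xi -> - / xi <= Y0 ->
  filterlim (zp xi) (within (fun u => - / xi <= u) (locally Y0)) (locally (zp xi Y0)).
Proof.
  intros Hx HY. apply lim_R; [typeclasses eauto|]. intros eps He. unfold within, locally.
  destruct (zp_spec xi Y0 HY) as [Hz0 Hg0]. set (z0 := zp xi Y0) in *.
  pose proof (g_dec xi (z0 - eps) z0 Hz0 ltac:(lra)) as Hhi.
  destruct (Rlt_le_dec 0 (z0 + eps)) as [Hc|Hc].
  - exists (mkposreal (g xi (z0 - eps) - Y0) ltac:(lra)). intros Y HB HD. change R in Y.
    apply ball_R in HB. cbn [pos] in HB. destruct (zp_spec xi Y HD) as [Hw Hgw].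
    apply Rabs_def2 in HB. change (@minus (AbsRing.AbelianGroup R_AbsRing) Y Y0) with (Y - Y0) in HB. apply Rabs_def1. lra.
    assert (z0 - eps < zp xi Y) by (apply (dec_inv xi); lra). lra.
  - pose proof (g_dec xi z0 (z0 + eps) Hc ltac:(lra)) as Hlo.
    exists (mkposreal (Rmin (g xi (z0 - eps) - Y0) (Y0 - g xi (z0 + eps)))
      ltac:(apply Rmin_pos; lra)). intros Y HB HD. change R in Y.
    apply ball_R in HB. cbn [pos] in HB. destruct (zp_spec xi Y HD) as [Hw Hgw].
    pose proof (Rmin_l (g xi (z0 - eps) - Y0) (Y0 - g xi (z0 + eps))).
    pose proof (Rmin_r (g xi (z0 - eps) - Y0) (Y0 - g xi (z0 + eps))).
    apply Rabs_def2 in HB. change (@minus (AbsRing.AbelianGroup R_AbsRing) Y Y0) with (Y - Y0) in HB. apply Rabs_def1.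
    assert (zp xi Y < z0 + eps) by (apply (dec_inv xi); lra). lra.
    assert (z0 - eps < zp xi Y) by (apply (dec_inv xi); lra). lra.
Qed.


Lemma cc_pos xi : 0 < xi -> 0 < / xi /\ cc xi = 1 + / xi.
Proof. intros. split. apply Rinv_0_lt_compat; auto. reflexivity. Qed.

Lemma inv_small z eps : 0 < eps -> / eps < z -> Rabs (/ z) < eps.
Proof.
  intros He Hz. assert (0 < / eps) by (apply Rinv_0_lt_compat; auto).
  assert (0 < z) by lra. rewrite Rabs_pos_eq by (left; apply Rinv_0_lt_compat; auto).
  assert (/ z * z = 1) by (field; lra). assert (/ eps * eps = 1) by (field; lra). nra.
Qed.

Lemma Q3_gen (F : (R -> Prop) -> Prop) {FF : Filter F} xi (y z : R -> R) :
  0 < xi -> (forall M, F (fun t => M < z t)) -> F (fun t => y t = g xi (z t)) ->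
  tends_Q3 F y z.
Proof.
  intros Hx Hz Hy. destruct (cc_pos xi Hx) as [Hi Hc].
  split; [|split].
  - apply Hz.
  - apply lim_R; auto. intros eps He.
    apply filter_imp with (2 := Hz (/ eps)). intros t Ht. rewrite Rminus_0_r.
    now apply inv_small.
  - apply lim_R; auto. intros eps He.
    apply filter_imp with (2 := filter_and _ _ (Hz ((1 + cc xi) / eps + 1)) Hy).
    intros t [Ht Hyt]. rewrite Hyt. unfold g.
    assert (0 < (1 + cc xi) / eps) by (apply Rdiv_lt_0_compat; lra).
    assert (Hzp : 0 < z t) by lra.
    set (w := z t) in *. set (e := exp (- w)).
    assert (0 < e) by apply exp_pos. assert (e <= 1) by (apply exp_le1; lra).
    assert (Hk : (w + e - cc xi) / w - 1 = (e - cc xi) * / w) by (field; lra).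
    rewrite Hk. set (iw := / w). assert (iw * w = 1) by (unfold iw; field; lra).
    assert (0 < iw) by (apply Rinv_0_lt_compat; lra).
    assert ((1 + cc xi) / eps * eps = 1 + cc xi) by (field; lra).
    assert (1 + cc xi < eps * w) by nra.
    apply Rabs_def1; nra.
Qed.

Lemma Q6_gen (F : (R -> Prop) -> Prop) {FF : Filter F} xi (y z : R -> R) :
  0 < xi -> (forall M, F (fun t => z t < M)) -> F (fun t => y t = g xi (z t)) ->
  tends_Q6 F y z.
Proof.
  intros Hx Hz Hy. destruct (cc_pos xi Hx) as [Hi Hc].
  assert (Hbig : forall M, 1 <= M -> F (fun t => M <= - z t /\ y t = - (- z t) + exp (- z t) - cc xi
            /\ 1 + (- z t) * (- z t) / 4 - cc xi <= y t)).
  { intros M HM. apply filter_imp with (2 := filter_and _ _ (Hz (- M)) Hy).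
    intros t [Ht Hyt].
    pose proof (exp_sq (- z t) ltac:(lra)).
    split; [lra|split]; rewrite Hyt; unfold g. ring. lra. }
  split; [|split].
  - apply filter_imp with (2 := Hbig (2 * cc xi + 2) ltac:(lra)).
    intros t [H1 [H2 H3]]. split. lra. nra.
  - apply lim_R; auto. intros eps He.
    apply filter_imp with (2 := Hbig (/ eps + 1) ltac:(assert (0 < / eps) by (apply Rinv_0_lt_compat; auto); lra)).
    intros t [H1 _]. rewrite Rminus_0_r. rewrite Rabs_Ropp.
    assert (0 < / eps) by (apply Rinv_0_lt_compat; auto).
    assert (Hn : z t <> 0) by (intro; lra).
    replace (/ z t) with (- / (- z t)) by (field; auto). rewrite Rabs_Ropp.
    apply inv_small; lra.
  - apply lim_R; auto. intros eps He.
    set (M := 4 * (2 + cc xi + eps * cc xi) / eps + 2 * cc xi + 2).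
    assert (HM0 : 4 * (2 + cc xi + eps * cc xi) / eps * eps = 4 * (2 + cc xi + eps * cc xi)) by (field; lra).
    assert (0 < 4 * (2 + cc xi + eps * cc xi) / eps).
    { apply Rdiv_lt_0_compat; nra. }
    apply filter_imp with (2 := Hbig M ltac:(unfold M; lra)).
    intros t [H1 [H2 H3]]. set (u := - z t) in *.
    assert (HMp : 2 <= M) by (unfold M; lra).
    replace (exp (- z t)) with (exp u) by reflexivity.
    assert (Hyp : 0 < y t) by (unfold M in H1; nra).
    assert (Hk : exp u / y t - 1 = (u + cc xi) * / y t) by (rewrite H2; field; lra).
    rewrite Hk. set (iy := / y t). assert (iy * y t = 1) by (unfold iy; field; lra).
    assert (0 < iy) by (apply Rinv_0_lt_compat; lra).
    assert (Hq : eps * u * u / 4 >= u * (2 + cc xi + eps * cc xi)).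
    { assert (HK : eps * M / 4 >= 2 + cc xi + eps * cc xi) by (unfold M; nra).
      assert (0 <= eps * u * (u - M)) by (apply Rmult_le_pos; nra).
      assert (0 <= u * (eps * M / 4 - (2 + cc xi + eps * cc xi))) by (apply Rmult_le_pos; lra).
      nra. }
    assert (0 <= eps * (y t - (1 + u * u / 4 - cc xi))) by (apply Rmult_le_pos; lra).
    assert (0 < cc xi) by lra.
    assert (0 <= (u - 2) * (cc xi + eps * cc xi)) by (apply Rmult_le_pos; nra).
    assert (u + cc xi < eps * y t) by nra.
    assert (0 < (u + cc xi) * iy) by (apply Rmult_lt_0_compat; lra).
    assert ((u + cc xi) * iy < eps * y t * iy) by (apply Rmult_lt_compat_r; lra).
    apply Rabs_def1; nra.
Qed.

Definition Qf xi Y Z := exp (- xi * Y) * xi * (Y - g xi Z).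

Lemma Q3_decay (F : (R -> Prop) -> Prop) {FF : Filter F} xi (y z : R -> R) :
  0 < xi -> tends_Q3 F y z -> forall eps, 0 < eps -> F (fun t => Rabs (Qf xi (y t) (z t)) < eps).
Proof.
  intros Hx [H1 [H2 H3]] eps He. destruct (cc_pos xi Hx) as [Hi Hc].
  set (B := 2 * xi + 1).
  set (M := 4 * (2 + B) / eps + 1).
  assert (HM0 : 4 * (2 + B) / eps * eps = 4 * (2 + B)) by (field; lra).
  assert (0 < 4 * (2 + B) / eps) by (apply Rdiv_lt_0_compat; unfold B; nra).
  assert (Hd : 0 < xi / (2 * M)) by (apply Rdiv_lt_0_compat; unfold M; lra).
  pose proof (lim_R_inv F _ _ H2 _ Hd) as H2'.
  pose proof (lim_R_inv F _ _ H3 (1/2) ltac:(lra)) as H3'.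
  apply filter_imp with (2 := filter_and _ _ H1 (filter_and _ _ H2' H3')).
  intros t [Hz [Hiz Hyz]]. rewrite Rminus_0_r in Hiz.
  set (Z := z t) in *. set (Y := y t) in *.
  rewrite Rabs_pos_eq in Hiz by (left; apply Rinv_0_lt_compat; auto).
  assert (/ Z * Z = 1) by (field; lra).
  assert (xi / (2 * M) * (2 * M) = xi) by (field; unfold M; lra).
  set (w := xi * Z / 2).
  assert (Hw : M < w).
  { assert (HM1 : 1 <= M) by (unfold M; lra).
    assert (Ha : 1 < xi / (2 * M) * Z).
    { assert (/ Z * Z < xi / (2 * M) * Z) by (apply Rmult_lt_compat_r; lra). lra. }
    assert (2 * M * 1 < 2 * M * (xi / (2 * M) * Z)) by (apply Rmult_lt_compat_l; lra).
    unfold w. replace (2 * M * (xi / (2 * M) * Z)) with (xi * Z) in * by (field; lra). lra. }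
  apply Rabs_def2 in Hyz.
  assert (HYZ : Y = Y / Z * Z) by (field; lra).
  assert (HY1 : Z / 2 < Y) by nra. assert (HY2 : Y < 3 * Z / 2) by nra.
  unfold Qf, g.
  set (E := exp (- xi * Y)). set (e := exp (- Z)).
  assert (0 < e) by apply exp_pos. assert (e <= 1) by (apply exp_le1; lra).
  assert (0 < E) by apply exp_pos.
  assert (E <= exp (- w)).
  { unfold E, w. destruct (Req_dec (- xi * Y) (- (xi * Z / 2))) as [Eq|Eq].
    rewrite Eq; lra. left; apply exp_increasing. nra. }
  pose proof (exp_opp_mul w). pose proof (exp_sq w ltac:(unfold M in Hw; lra)).
  pose proof (exp_pos (- w)).
  assert (Hkey : exp (- w) * (w + B) < eps).
  { assert (w + B < eps * exp w).
    { assert (eps * w * w / 4 >= w * (2 + B)).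
      { assert (eps * M >= 4 * (2 + B)) by (unfold M; nra).
        assert (HM1 : 1 <= M) by (unfold M; lra).
        assert (0 <= eps * w * (w - M)) by (apply Rmult_le_pos; nra).
        assert (0 <= w * (eps * M - 4 * (2 + B))) by (apply Rmult_le_pos; lra).
        nra. }
      assert (HM1 : 1 <= M) by (unfold M; lra).
      assert (0 <= eps * (exp w - (1 + w + w * w / 4))) by (apply Rmult_le_pos; lra).
      assert (0 < B) by (unfold B; lra).
      assert (0 <= (w - 1) * B) by (apply Rmult_le_pos; lra).
      nra. }
    assert (exp (- w) * (w + B) < exp (- w) * (eps * exp w)) by (apply Rmult_lt_compat_l; lra).
    nra. }
  assert (Habs : Rabs (xi * (Y - (Z + e - cc xi))) <= w + B).
  { rewrite Hc. unfold B, w. apply Rabs_le.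
    assert (xi * / xi = 1) by (field; lra). split; nra. }
  rewrite Rmult_assoc, Rabs_mult, Rabs_pos_eq by lra.
  apply Rle_lt_trans with (exp (- w) * (w + B)); auto.
  pose proof (Rabs_pos (xi * (Y - (Z + e - cc xi)))). nra.
Qed.


Lemma filt_r a : Filter (Rbar_at_right' a).
Proof. destruct a; simpl; typeclasses eauto. Qed.
Lemma filt_l a : Filter (Rbar_at_left' a).
Proof. destruct a; simpl; typeclasses eauto. Qed.

Lemma in_between (a b : Rbar) (t1 t2 x : R) :
  Rbar_lt a t1 -> Rbar_lt a t2 -> Rbar_lt t1 b -> Rbar_lt t2 b ->
  Rmin t1 t2 <= x <= Rmax t1 t2 -> Rbar_lt a x /\ Rbar_lt x b.
Proof.
  intros H1 H2 H3 H4 [H5 H6].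
  assert (Hx : (t1 <= x /\ x <= t2) \/ (t2 <= x /\ x <= t1)).
  { destruct (Rle_dec t1 t2).
    - rewrite Rmin_left in H5 by lra. rewrite Rmax_right in H6 by lra. lra.
    - rewrite Rmin_right in H5 by lra. rewrite Rmax_left in H6 by lra. lra. }
  split.
  - destruct a as [a| |]; simpl in H1, H2 |- *; try tauto; lra.
  - destruct b as [b| |]; simpl in H3, H4 |- *; try tauto; lra.
Qed.

Lemma end_r (a b : Rbar) (P : R -> Prop) : Rbar_lt a b -> Rbar_at_right' a P ->
  exists t : R, Rbar_lt a t /\ Rbar_lt t b /\ P t.
Proof.
  intros Hab HP. destruct a as [a| |]; simpl in *.
  - destruct HP as [eps Heps].
    set (d := match b with Finite b => Rmin (eps / 2) ((b - a) / 2) | _ => eps / 2 end).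
    assert (Hd : 0 < d /\ d < eps /\ Rbar_lt (a + d) b).
    { pose proof (cond_pos eps). unfold d. destruct b as [b| |]; simpl in *; try tauto.
      pose proof (Rmin_l (eps/2) ((b - a)/2)). pose proof (Rmin_r (eps/2) ((b - a)/2)).
      assert (0 < Rmin (eps/2) ((b-a)/2)) by (apply Rmin_pos; lra). repeat split; lra.
      repeat split; lra. }
    exists (a + d). destruct Hd as [Hd1 [Hd2 Hd3]]. repeat split; auto. lra.
    apply Heps. apply ball_R. rewrite Rabs_pos_eq; lra. lra.
  - destruct Hab.
  - destruct HP as [M HM].
    set (t := match b with Finite b => Rmin M b - 1 | _ => M - 1 end).
    exists t. unfold t. destruct b as [b| |]; simpl in *; try tauto.
    pose proof (Rmin_l M b). pose proof (Rmin_r M b). repeat split; auto. lra. apply HM; lra.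
    repeat split; auto. apply HM; lra.
Qed.

Lemma end_l (a b : Rbar) (P : R -> Prop) : Rbar_lt a b -> Rbar_at_left' b P ->
  exists t : R, Rbar_lt a t /\ Rbar_lt t b /\ P t.
Proof.
  intros Hab HP. destruct b as [b| |]; simpl in *.
  - destruct HP as [eps Heps].
    set (d := match a with Finite a => Rmin (eps / 2) ((b - a) / 2) | _ => eps / 2 end).
    assert (Hd : 0 < d /\ d < eps /\ Rbar_lt a (b - d)).
    { pose proof (cond_pos eps). unfold d. destruct a as [a| |]; simpl in *; try tauto.
      pose proof (Rmin_l (eps/2) ((b - a)/2)). pose proof (Rmin_r (eps/2) ((b - a)/2)).
      assert (0 < Rmin (eps/2) ((b-a)/2)) by (apply Rmin_pos; lra). repeat split; lra.
      repeat split; lra. }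
    exists (b - d). destruct Hd as [Hd1 [Hd2 Hd3]]. repeat split; auto. lra.
    apply Heps. apply ball_R. rewrite Rabs_left; lra. lra.
  - destruct HP as [M HM].
    set (t := match a with Finite a => Rmax M a + 1 | _ => M + 1 end).
    exists t. unfold t. destruct a as [a| |]; simpl in *; try tauto.
    pose proof (Rmax_l M a). pose proof (Rmax_r M a). repeat split; auto. lra. apply HM; lra.
    repeat split; auto. apply HM; lra.
  - destruct a; destruct Hab.
Qed.


Lemma Qf_deriv xi (y z : R -> R) t : 0 < xi ->
  is_derive y t (field_y (y t) (z t)) -> is_derive z t (field_z xi (y t) (z t)) ->
  is_derive (fun s => Qf xi (y s) (z s)) t 0.
Proof.
  intros Hx Hy Hz. unfold Qf, g, cc.
  assert (Ey : ex_derive y t) by (eexists; eauto).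
  assert (Ez : ex_derive z t) by (eexists; eauto).
  auto_derive. auto.
  replace (Derive (fun x => y x) t) with (field_y (y t) (z t)) by (symmetry; apply is_derive_unique; auto).
  replace (Derive (fun x => z x) t) with (field_z xi (y t) (z t)) by (symmetry; apply is_derive_unique; auto).
  unfold field_y, field_z. rewrite exp_Ropp.
  pose proof (exp_pos (z t)). field. split; lra.
Qed.

Lemma Qf_const xi a b (y z : R -> R) : 0 < xi -> is_sol xi a b y z ->
  forall t1 t2 : R, Rbar_lt a t1 -> Rbar_lt t1 b -> Rbar_lt a t2 -> Rbar_lt t2 b ->
  Qf xi (y t1) (z t1) = Qf xi (y t2) (z t2).
Proof.
  intros Hx [Hab Hs] t1 t2 H1 H2 H3 H4.
  destruct (MVT_gen (fun s => Qf xi (y s) (z s)) t1 t2 (fun _ => 0)) as [c [_ Hc]].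
  - intros x Hxx. destruct (in_between a b t1 t2 x H1 H3 H2 H4 ltac:(lra)) as [Ha Hb].
    destruct (Hs x Ha Hb). apply Qf_deriv; auto.
  - intros x Hxx. destruct (in_between a b t1 t2 x H1 H3 H2 H4 Hxx) as [Ha Hb].
    destruct (Hs x Ha Hb).
    apply continuity_pt_filterlim. apply (ex_derive_continuous (fun s => Qf xi (y s) (z s))).
    eexists. apply Qf_deriv; eauto.
  - lra.
Qed.

Lemma sol_on_level xi a b (y z : R -> R) : 0 < xi -> heteroclinic_Q3_Q6 xi a b y z ->
  forall t : R, Rbar_lt a t -> Rbar_lt t b -> Qf xi (y t) (z t) = 0.
Proof.
  intros Hx [Hsol Hend] t Ht1 Ht2.
  pose proof (proj1 Hsol) as Hab.
  destruct (Req_dec (Qf xi (y t) (z t)) 0) as [|Hne]; auto. exfalso.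
  assert (He : 0 < Rabs (Qf xi (y t) (z t))) by (apply Rabs_pos_lt; auto).
  assert (exists s : R, Rbar_lt a s /\ Rbar_lt s b /\
     Rabs (Qf xi (y s) (z s)) < Rabs (Qf xi (y t) (z t))) as [s [Hs1 [Hs2 Hs3]]].
  { destruct Hend as [[_ H3]|[H3 _]].
    - apply end_l; auto. apply (Q3_decay _ (FF := filt_l b)); auto.
    - apply end_r; auto. apply (Q3_decay _ (FF := filt_r a)); auto. }
  rewrite (Qf_const xi a b y z Hx Hsol s t) in Hs3; auto. lra.
Qed.

Lemma z_big_Q3 F {FF : Filter F} (y z : R -> R) : tends_Q3 F y z -> forall M, F (fun t => M < z t).
Proof.
  intros [H1 [H2 _]] M.
  set (K := Rabs M + 1).
  assert (0 < / K) by (apply Rinv_0_lt_compat; unfold K; pose proof (Rabs_pos M); lra).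
  apply filter_imp with (2 := filter_and _ _ H1 (lim_R_inv F _ _ H2 _ H)).
  intros t [Hz Hi]. rewrite Rminus_0_r, Rabs_pos_eq in Hi by (left; apply Rinv_0_lt_compat; auto).
  assert (K < z t).
  { assert (HK : 0 < K) by (unfold K; pose proof (Rabs_pos M); lra).
    assert (/ z t * z t = 1) by (field; lra). assert (/ K * K = 1) by (field; lra).
    assert (/ z t * (z t * K) < / K * (z t * K)) by (apply Rmult_lt_compat_r; nra). nra. }
  unfold K in *. pose proof (Rle_abs M). lra.
Qed.

Lemma z_small_Q6 F {FF : Filter F} (y z : R -> R) : tends_Q6 F y z -> forall M, F (fun t => z t < M).
Proof.
  intros [H1 [H2 _]] M.
  set (K := Rabs M + 1).
  assert (0 < / K) by (apply Rinv_0_lt_compat; unfold K; pose proof (Rabs_pos M); lra).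
  apply filter_imp with (2 := filter_and _ _ H1 (lim_R_inv F _ _ H2 _ H)).
  intros t [[Hz _] Hi]. rewrite Rminus_0_r, Rabs_pos_eq in Hi.
  2:{ assert (0 < - / z t). { replace (- / z t) with (/ (- z t)) by (field; lra).
      apply Rinv_0_lt_compat; lra. } lra. }
  assert (K < - z t).
  { assert (HK : 0 < K) by (unfold K; pose proof (Rabs_pos M); lra).
    replace (- / z t) with (/ (- z t)) in Hi by (field; lra).
    assert (/ (- z t) * (- z t) = 1) by (field; lra). assert (/ K * K = 1) by (field; lra).
    assert (/ (- z t) * (- z t * K) < / K * (- z t * K)) by (apply Rmult_lt_compat_r; nra). nra. }
  unfold K in *. pose proof (Rle_abs (- M)). rewrite Rabs_Ropp in H3. lra.
Qed.


Lemma z_cont xi a b (y z : R -> R) (x : R) : is_sol xi a b y z -> Rbar_lt a x -> Rbar_lt x b ->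
  continuity_pt z x.
Proof.
  intros [_ Hs] H1 H2. destruct (Hs x H1 H2) as [_ Hz].
  apply continuity_pt_filterlim. apply (ex_derive_continuous z). eexists; eauto.
Qed.

Lemma Qf_zero xi Y Z : 0 < xi -> Qf xi Y Z = 0 -> Y = g xi Z.
Proof.
  intros Hx H0. unfold Qf in H0. pose proof (exp_pos (- xi * Y)).
  apply Rmult_integral in H0. destruct H0 as [H0|H0]. apply Rmult_integral in H0. lra. lra.
Qed.

Lemma part2 xi (hxi : 0 < xi) : forall (a b : Rbar) (y z : R -> R),
      heteroclinic_Q3_Q6 xi a b y z ->
      forall Y Z : R, orbit a b y z Y Z <-> H xi Y Z = 1.
Proof.
  intros a b y z Hh Y Z. pose proof (sol_on_level xi a b y z hxi Hh) as Hlev.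
  destruct Hh as [Hsol Hend]. pose proof (proj1 Hsol) as Hab.
  rewrite H_iff by auto. split.
  - intros [t [H1 [H2 [<- <-]]]]. apply Qf_zero; auto.
  - intros HY.
    assert (exists t1 t2 : R, Rbar_lt a t1 /\ Rbar_lt t1 b /\ Rbar_lt a t2 /\ Rbar_lt t2 b /\
              z t1 < Z /\ Z < z t2) as [t1 [t2 [A1 [A2 [A3 [A4 [A5 A6]]]]]]].
    { destruct Hend as [[H6 H3]|[H3 H6]].
      - destruct (end_r a b _ Hab (z_small_Q6 _ (FF := filt_r a) y z H6 Z)) as [t1 [? [? ?]]].
        destruct (end_l a b _ Hab (z_big_Q3 _ (FF := filt_l b) y z H3 Z)) as [t2 [? [? ?]]].
        exists t1, t2; tauto.
      - destruct (end_l a b _ Hab (z_small_Q6 _ (FF := filt_l b) y z H6 Z)) as [t1 [? [? ?]]].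
        destruct (end_r a b _ Hab (z_big_Q3 _ (FF := filt_r a) y z H3 Z)) as [t2 [? [? ?]]].
        exists t1, t2; tauto. }
    assert (exists t : R, Rmin t1 t2 <= t <= Rmax t1 t2 /\ z t = Z) as [t [Ht Hzt]].
    { destruct (Rlt_le_dec t1 t2) as [Hlt|Hle].
      - destruct (Ranalysis5.IVT_interv (fun s => z s - Z) t1 t2) as [t [Ht Hzt]].
        + intros c Hc. apply continuity_pt_minus. apply (z_cont xi a b y z); auto;
            apply (in_between a b t1 t2 c); auto; rewrite Rmin_left, Rmax_right; lra.
          apply continuity_pt_const. intros u v; reflexivity.
        + auto.
        + lra.
        + lra.
        + exists t. rewrite Rmin_left, Rmax_right by lra. split; lra.
      - destruct (Ranalysis5.IVT_interv (fun s => Z - z s) t2 t1) as [t [Ht Hzt]].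
        + intros c Hc. apply continuity_pt_minus.
          apply continuity_pt_const. intros u v; reflexivity.
          apply (z_cont xi a b y z); auto;
            apply (in_between a b t1 t2 c); auto; rewrite Rmin_right, Rmax_left; lra.
        + destruct Hle; auto. subst. lra.
        + lra.
        + lra.
        + exists t. rewrite Rmin_right, Rmax_left by lra. split; lra. }
    destruct (in_between a b t1 t2 t A1 A3 A2 A4 Ht) as [B1 B2].
    exists t. repeat split; auto.
    rewrite (Qf_zero xi (y t) (z t) hxi (Hlev t B1 B2)). rewrite Hzt. auto.
Qed.


Lemma field_z_g xi Z : 0 < xi -> field_z xi (g xi Z) Z = exp Z.
Proof.
  intros Hx. unfold field_z, g, cc. rewrite exp_Ropp. pose proof (exp_pos Z). field. split; lra.
Qed.

Definition zs (t : R) := - ln (- t).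

Lemma zs_der t : t < 0 -> is_derive zs t (exp (zs t)).
Proof.
  intros Ht. unfold zs. auto_derive. lra.
  rewrite exp_Ropp, exp_ln by lra. field. lra.
Qed.

Lemma part1 xi (hxi : 0 < xi) : exists (a b : Rbar) (y z : R -> R),
      is_sol xi a b y z /\
      tends_Q6 (Rbar_at_right' a) y z /\ tends_Q3 (Rbar_at_left' b) y z.
Proof.
  exists m_infty, (Finite 0), (fun t => g xi (zs t)), zs.
  split; [|split].
  - split. simpl; auto. intros t _ Ht. simpl in Ht. split.
    + unfold field_y. pose proof (zs_der t Ht) as Hd.
      assert (is_derive (fun s => g xi (zs s)) t ((1 - exp (- zs t)) * exp (zs t))).
      { unfold g. auto_derive. assert (ex_derive (fun x => zs x) t) by (exists (exp (zs t)); auto). tauto.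
        replace (Derive (fun x => zs x) t) with (exp (zs t)) by (symmetry; apply is_derive_unique; auto). ring. }
      replace (exp (zs t) - 1) with ((1 - exp (- zs t)) * exp (zs t)); auto.
      rewrite exp_Ropp. pose proof (exp_pos (zs t)). field. lra.
    + rewrite (field_z_g xi) by auto. apply zs_der; auto.
  - simpl. apply (Q6_gen _ (FF := filt_r m_infty) xi); auto.
    + intros M. exists (- exp (- M)). intros t Ht. unfold zs.
      assert (- M < ln (- t)).
      { rewrite <- (ln_exp (- M)). apply ln_increasing. apply exp_pos. lra. }
      lra.
    + apply filter_forall. reflexivity.
  - simpl. apply (Q3_gen _ (FF := filt_l (Finite 0)) xi); auto.
    + intros M. exists (mkposreal (exp (- M)) (exp_pos _)). intros t Hb Ht.
      apply (proj1 (ball_R _ _ _)) in Hb. cbn [pos] in Hb. rewrite Rminus_0_r, Rabs_left in Hb by lra.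
      unfold zs.
      assert (ln (- t) < - M).
      { rewrite <- (ln_exp (- M)). apply ln_increasing; lra. }
      lra.
    + apply filter_forall. reflexivity.
Qed.


Lemma part3 xi (hxi : 0 < xi) :
  (exists zm zp : R -> R,
      (forall Y Z : R,
          H xi Y Z = 1 <-> (- / xi <= Y /\ (Z = zm Y \/ Z = zp Y))) /\
      (forall Y : R, - / xi <= Y -> filterlim zm (within (fun u => - / xi <= u) (locally Y)) (locally (zm Y)) /\
          filterlim zp (within (fun u => - / xi <= u) (locally Y)) (locally (zp Y))) /\
      tends_Q3 (Rbar_locally p_infty) (fun Y => Y) zm /\
      (exists C : R, Rbar_locally p_infty (fun Y => Rabs (zm Y) <= C * Rabs Y)) /\
      tends_Q6 (Rbar_locally p_infty) (fun Y => Y) zp /\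
      (exists C : R, Rbar_locally p_infty (fun Y => Rabs (zp Y) <= C * Rabs (ln Y)))).
Proof.
  destruct (cc_pos xi hxi) as [Hi Hc].
  exists (zm xi), (zp xi). split; [|split; [|split; [|split; [|split]]]].
  - intros Y Z. rewrite H_iff by auto. split.
    + intros ->. split. apply g_ge.
      destruct (Rle_lt_dec 0 Z) as [HZ|HZ].
      * left. destruct (zm_spec xi (g xi Z) (g_ge xi Z)) as [H1 H2].
        destruct (Rtotal_order Z (zm xi (g xi Z))) as [Hl|[He|Hl]]; auto.
        pose proof (g_inc xi _ _ HZ Hl). lra.
        pose proof (g_inc xi _ _ H1 Hl). lra.
      * right. destruct (zp_spec xi (g xi Z) (g_ge xi Z)) as [H1 H2].
        destruct (Rtotal_order Z (zp xi (g xi Z))) as [Hl|[He|Hl]]; auto.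
        pose proof (g_dec xi _ _ H1 Hl). lra.
        pose proof (g_dec xi (zp xi (g xi Z)) Z ltac:(lra) Hl). lra.
    + intros [HY [->| ->]].
      * symmetry. apply zm_spec; auto.
      * symmetry. apply zp_spec; auto.
  - intros Y HY. split. apply zm_cont; auto. apply zp_cont; auto.
  - apply (Q3_gen _ (FF := filt_r p_infty) xi); auto.
    + intros M. exists (Rmax M (- / xi)). intros Y HY.
      pose proof (Rmax_l M (- / xi)). pose proof (Rmax_r M (- / xi)).
      destruct (zm_spec xi Y ltac:(lra)) as [H1 H2]. unfold g in H2.
      pose proof (exp_le1 _ H1). lra.
    + exists (- / xi). intros Y HY. symmetry. apply zm_spec; lra.
  - exists 2, (cc xi). intros Y HY.
    destruct (zm_spec xi Y ltac:(lra)) as [H1 H2]. unfold g in H2.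
    pose proof (exp_pos (- zm xi Y)).
    rewrite Rabs_pos_eq by lra. rewrite (Rabs_pos_eq Y) by lra. lra.
  - apply (Q6_gen _ (FF := filt_r p_infty) xi); auto.
    + intros M. exists (exp (- M)). intros Y HY.
      pose proof (exp_pos (- M)).
      destruct (zp_spec xi Y ltac:(lra)) as [H1 H2]. unfold g in H2.
      assert (exp (- M) < exp (- zp xi Y)) by lra.
      apply exp_lt_inv in H0. lra.
    + exists (- / xi). intros Y HY. symmetry. apply zp_spec; lra.
  - exists 2, (2 * cc xi + 3). intros Y HY.
    destruct (zp_spec xi Y ltac:(lra)) as [H1 H2]. unfold g in H2.
    set (u := - zp xi Y) in *.
    pose proof (exp_sq u ltac:(unfold u; lra)).
    assert (Hzu : zp xi Y = - u) by (unfold u; ring).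
    rewrite Hzu in H2.
    assert (Hsq : u * u <= 4 * (Y + cc xi - 1)) by lra.
    assert (0 <= u) by (unfold u; lra).
    assert (Hu : u <= Y + cc xi).
    { destruct (Rle_lt_dec u (Y + cc xi)); auto.
      assert ((Y + cc xi) * (Y + cc xi) < u * u) by nra.
      pose proof (pow2_ge_0 (Y + cc xi - 2)). simpl in *. nra. }
    assert (Hle : exp u <= Y * Y) by nra.
    assert (2 * ln Y = ln (Y * Y)) by (rewrite ln_mult by lra; ring).
    assert (u <= ln (Y * Y)).
    { rewrite <- (ln_exp u). apply ln_le. apply exp_pos. auto. }
    assert (0 <= ln Y).
    { rewrite <- ln_1. apply ln_le; lra. }
    rewrite Rabs_left1 by lra. rewrite (Rabs_pos_eq (ln Y)) by lra.
    fold u. lra.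
Qed.


Theorem lemma3 (xi : R) (hxi : 0 < xi) :
  (* existence of a heteroclinic connection (from Q^6 to Q^3) *)
  (exists (a b : Rbar) (y z : R -> R),
      is_sol xi a b y z /\
      tends_Q6 (Rbar_at_right' a) y z /\ tends_Q3 (Rbar_at_left' b) y z) /\
  (* uniqueness: every heteroclinic connection between Q^3 and Q^6 has as orbit
     exactly the level set {H = 1} *)
  (forall (a b : Rbar) (y z : R -> R),
      heteroclinic_Q3_Q6 xi a b y z ->
      forall Y Z : R, orbit a b y z Y Z <-> H xi Y Z = 1) /\
  (* the level set {H = 1} is the union of two graphs z = z^-(y), z = z^+(y),
     y >= -1/xi *)
  (exists zm zp : R -> R,
      (forall Y Z : R,
          H xi Y Z = 1 <-> (- / xi <= Y /\ (Z = zm Y \/ Z = zp Y))) /\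
      (forall Y : R, - / xi <= Y -> filterlim zm (within (fun u => - / xi <= u) (locally Y)) (locally (zm Y)) /\
          filterlim zp (within (fun u => - / xi <= u) (locally Y)) (locally (zp Y))) /\
      (* z^- approaches Q^3 as y -> oo, with z^- = O(y) *)
      tends_Q3 (Rbar_locally p_infty) (fun Y => Y) zm /\
      (exists C : R, Rbar_locally p_infty (fun Y => Rabs (zm Y) <= C * Rabs Y)) /\
      (* z^+ approaches Q^6 as y -> oo, with z^+ = O(ln y) *)
      tends_Q6 (Rbar_locally p_infty) (fun Y => Y) zp /\
      (exists C : R, Rbar_locally p_infty (fun Y => Rabs (zp Y) <= C * Rabs (ln Y)))).
Proof.
  split; [apply part1; auto|split; [apply part2; auto|apply part3; auto]].
Qed.
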